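(* Let $R$ be a commutative ring with identity and $M$ a non-zero comultiplication $R$-module with $G'(M)$ non-null. Then $G'(M)$ is not a complete $n$-partite graph for any integer $n\ge 2$.
   Context: An $R$-module $M$ is a comultiplication module if for every submodule $N$ of $M$ there is an ideal $I$ of $R$ with $N=\mathrm{Ann}_M(I)$. A submodule $N$ of $M$ is large if $N\cap L\neq 0$ for every non-zero submodule $L$ of $M$. The large sum graph $G'(M)$ has as vertex set the set of all non-zero non-large submodules of $M$, and two distinct vertices $N,K$ are adjacent iff $N+K$ is non-large in $M$. A complete $n$-partite graph is one whose vertex set is partitioned into $n$ non-empty parts such that two vertices are adjacent iff they lie in different parts. *)

(* Defs.v *)
From HB Require Import structures.
From mathcomp Require Import all_boot all_order all_algebra.
Set Implicit Arguments. Unset Strict Implicit. Unset Printing Implicit Defensive.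
Import GRing.Theory.
Local Open Scope ring_scope.

Section Defs.
Variables (R : comPzRingType) (M : lmodType R).

Definition submodule (N : M -> Prop) : Prop :=
  [/\ N 0, (forall x y, N x -> N y -> N (x + y)) & (forall (r : R) x, N x -> N (r *: x))].

Definition ideal (I : R -> Prop) : Prop :=
  [/\ I 0, (forall a b, I a -> I b -> I (a + b)) & (forall r a, I a -> I (r * a))].

Definition annM (I : R -> Prop) : M -> Prop := fun m => forall r, I r -> r *: m = 0.

Definition same_set (N K : M -> Prop) : Prop := forall x, N x <-> K x.

Definition comultiplication_module : Prop :=
  forall N, submodule N -> exists I, ideal I /\ same_set N (annM I).

Definition nonzero_set (N : M -> Prop) : Prop := exists x, N x /\ x <> 0.

Definition large (N : M -> Prop) : Prop :=
  submodule N /\ forall L, submodule L -> nonzero_set L -> nonzero_set (fun x => N x /\ L x).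

Definition sum_set (N K : M -> Prop) : M -> Prop :=
  fun x => exists a b, [/\ N a, K b & x = a + b].

Definition lsg_vertex (N : M -> Prop) : Prop :=
  [/\ submodule N, nonzero_set N & ~ large N].

Definition lsg_adj (N K : M -> Prop) : Prop :=
  [/\ lsg_vertex N, lsg_vertex K, ~ same_set N K & ~ large (sum_set N K)].

Definition lsg_nonnull : Prop := exists N K, lsg_adj N K.

(* G'(M) is complete n-partite: its vertex set is partitioned into n non-empty
   parts (given by a part-labelling [part], invariant under equality of
   submodules), two vertices being adjacent iff they lie in different parts. *)
Definition lsg_complete_npartite (n : nat) : Prop :=
  exists part : (M -> Prop) -> 'I_n,
    [/\ (forall N K, lsg_vertex N -> lsg_vertex K -> same_set N K -> part N = part K),
        (forall i : 'I_n, exists N, lsg_vertex N /\ part N = i)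
      & (forall N K, lsg_vertex N -> lsg_vertex K -> ~ same_set N K ->
           (lsg_adj N K <-> part N <> part K))].
End Defs.

(* Main.v *)
Require Import Defs.
From HB Require Import structures.
From mathcomp Require Import all_boot all_order all_algebra.
From Stdlib Require Import Classical ClassicalEpsilon.

Import GRing.Theory.
Local Open Scope ring_scope.

Section Aux.
Variables (R : comPzRingType) (M : lmodType R).
Implicit Types N K L X Y Z W : M -> Prop.

Definition incl N K := forall x, N x -> K x.

Lemma sum_sub N K : submodule N -> submodule K -> submodule (sum_set N K).
Proof.
case=> N0 ND NZ [K0 KD KZ]; split.
- by exists 0, 0; rewrite addr0.
- move=> x y [a [b [Na Kb ->]]] [c [d [Nc Kd ->]]].
  exists (a + c), (b + d); split; [exact: ND|exact: KD|by rewrite addrACA].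
- move=> r x [a [b [Na Kb ->]]]; exists (r *: a), (r *: b); split;
  [exact: NZ|exact: KZ|by rewrite scalerDr].
Qed.

Lemma incl_suml N K : submodule K -> incl N (sum_set N K).
Proof. by case=> K0 _ _ x Nx; exists x, 0; rewrite addr0. Qed.

Lemma incl_sumr N K : submodule N -> incl K (sum_set N K).
Proof. by case=> N0 _ _ x Kx; exists 0, x; rewrite add0r. Qed.

Lemma sum_incl X Z : incl X Z -> submodule Z -> incl (sum_set X Z) Z.
Proof. move=> XZ [_ ZD _] x [a [b [Xa Zb ->]]]; exact: ZD (XZ _ Xa) Zb. Qed.

Lemma sum_mono X Z Y : incl X Z -> incl (sum_set X Y) (sum_set Z Y).
Proof. by move=> XZ x [a [b [Xa Yb ->]]]; exists a, b; split=> //; apply: XZ. Qed.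

Lemma large_mono A B : large A -> incl A B -> submodule B -> large B.
Proof.
case=> _ HA AB SB; split=> // L SL [y [Ly y0]].
have [z [[Az Lz] z0]] := HA L SL (ex_intro _ y (conj Ly y0)).
by exists z; split=> //; split=> //; apply: AB.
Qed.

Variable n : nat.
Variable part : (M -> Prop) -> 'I_n.
Hypothesis Hinv : forall N K, lsg_vertex N -> lsg_vertex K -> same_set N K -> part N = part K.
Hypothesis Hiff : forall N K, lsg_vertex N -> lsg_vertex K -> ~ same_set N K ->
           (lsg_adj N K <-> part N <> part K).

Lemma nonadj_part X Y : lsg_vertex X -> lsg_vertex Y -> large (sum_set X Y) -> part X = part Y.
Proof.
move=> vX vY lXY; have [sXY|nsXY] := classic (same_set X Y); first exact: Hinv.
apply: NNPP => npart; have := (proj2 (Hiff _ _ vX vY nsXY)) npart.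
by case.
Qed.

Lemma key X Z Y : lsg_vertex X -> lsg_vertex Z -> lsg_vertex Y -> incl X Z ->
  ~ same_set X Z -> ~ large (sum_set X Y).
Proof.
move=> vX vZ vY XZ nXZ lXY.
have pXY := nonadj_part _ _ vX vY lXY.
have lZY : large (sum_set Z Y).
  apply: (large_mono _ _ lXY (sum_mono _ _ _ XZ)); apply: sum_sub; [case: vZ|case: vY] => //.
have pZY := nonadj_part _ _ vZ vY lZY.
have adj : lsg_adj X Z.
  split=> // lXZ; case: vZ => sZ _; apply; apply: (large_mono _ _ lXZ _ sZ).
  by apply: sum_incl.
by have := (proj1 (Hiff _ _ vX vZ nXZ)) adj; rewrite pXY pZY.
Qed.

Lemma vertex_of N : submodule N -> nonzero_set N -> ~ large N -> lsg_vertex N.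
Proof. by move=> *; split. Qed.

Lemma exists_max X : lsg_vertex X ->
  exists W, lsg_vertex W /\ forall V, lsg_vertex V -> incl W V -> same_set W V.
Proof.
move=> vX; apply: NNPP => nex.
have H : forall W, lsg_vertex W -> exists V, lsg_vertex V /\ incl W V /\ ~ same_set W V.
  move=> W vW; apply: NNPP => nV; apply: nex; exists W; split=> // V vV WV.
  by apply: NNPP => nWV; apply: nV; exists V.
pose P W V := lsg_vertex V /\ incl W V /\ ~ same_set W V.
pose g W := epsilon (inhabits W) (P W).
have gP W : lsg_vertex W -> P W (g W) by move=> vW; apply: epsilon_spec; apply: H.
pose s k := iter k g X.
have vs k : lsg_vertex (s k) by elim: k => //= k IH; case: (gP _ IH).
have inc i j : (i <= j)%N -> incl (s i) (s j).
  move=> /subnK <-; elim: (j - i)%N => // k IH x /IH /=.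
  by case: (gP _ (vs (k + i)%N)) => _ [+ _]; apply.
have strict i j : (i < j)%N -> ~ same_set (s i) (s j).
  move=> lij sij; case: (gP _ (vs i)) => _ [_]; apply=> x; split.
    by case: (gP _ (vs i)) => _ [+ _]; apply.
  by move=> /(inc _ _ lij) /sij.
have pd i j : (i < j)%N -> part (s i) <> part (s j).
  move=> lij; apply: (proj1 (Hiff _ _ (vs i) (vs j) (strict _ _ lij))).
  split; [exact: vs|exact: vs|exact: strict|].
  case: (vs j) => sj _ nl lij'; apply: nl; apply: (large_mono _ _ lij' _ sj).
  by apply: sum_incl => //; apply: inc; apply: ltnW.
pose h (i : 'I_n.+1) := part (s i).
have hinj : injective h.
  move=> i j hij; apply/eqP; apply: contraT => nij.
  case: (ltngtP i j) => [lt|gt|eq].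
  - by case: (pd _ _ lt).
  - by case: (pd _ _ gt).
  - by move: nij; rewrite (val_inj eq) eqxx.
have := leq_card h hinj; rewrite !card_ord; by rewrite ltnn.
Qed.

End Aux.
Arguments incl {R M}.
Arguments sum_sub {R M}.
Arguments incl_suml {R M}.
Arguments incl_sumr {R M}.
Arguments sum_incl {R M}.
Arguments sum_mono {R M}.
Arguments large_mono {R M}.
Arguments key {R M}.
Arguments exists_max {R M}.
Arguments nonadj_part {R M}.
Arguments vertex_of {R M}.

Theorem theorem2p10 (R : comPzRingType) (M : lmodType R) :
  (exists x : M, x <> 0%R) ->
  comultiplication_module M ->
  lsg_nonnull M ->
  forall n : nat, (2 <= n)%N -> ~ lsg_complete_npartite M n.
Proof.
move=> _ _ [N [K [vN vK nNK nlS]]] n _ [part [Hinv Hex Hiff]].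
have sN : submodule N by case: vN.
have sK : submodule K by case: vK.
have sS := sum_sub _ _ sN sK.
have vS : lsg_vertex (sum_set N K).
  split=> //; case: vN => _ [x [Nx x0]] _; exists x; split=> //; exact: incl_suml.
have [X [vX [XS nXS]]] : exists X, lsg_vertex X /\ incl X (sum_set N K) /\ ~ same_set X (sum_set N K).
  have [sNS|nNS] := classic (same_set N (sum_set N K)); last first.
    by exists N; split=> //; split=> //; exact: incl_suml.
  exists K; split=> //; split; first exact: incl_sumr.
  move=> sKS; apply: nNK => x; rewrite sNS sKS; done.
have univ : forall Y, lsg_vertex Y -> ~ large (sum_set X Y).
  move=> Y vY; exact: key _ _ Hinv Hiff _ _ _ vX vS vY XS nXS.
have [W [vW maxW]] := exists_max _ _ Hiff _ vX.
case: (vW) => sW [w [Ww w0]] nlW.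
have [L [sL [[l [Ll l0]] indep]]] : exists L, submodule L /\ nonzero_set L /\
     forall x, W x -> L x -> x = 0.
  apply: NNPP => nL; apply: nlW; split=> // L SL nzL; apply: NNPP => nI.
  apply: nL; exists L; split=> //; split=> // x Wx Lx; apply: NNPP => x0.
  by apply: nI; exists x.
have sX : submodule X by case: vX.
have vL : lsg_vertex L.
  split=> //; first by exists l. case=> _ HL.
  have [z [[Lz Wz] z0]] := HL W sW (ex_intro _ w (conj Ww w0)).
  by apply: z0; apply: indep.
have XW : incl X W.
  have vXW : lsg_vertex (sum_set X W).
    split; [exact: sum_sub|exists w; split=> //; exact: incl_sumr|exact: univ].
  have := maxW _ vXW (incl_sumr _ _ sX) => sm x Xx.
  by apply/sm; apply: incl_suml.
have vXL : lsg_vertex (sum_set X L).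
  split; [exact: sum_sub|exists l; split=> //; exact: incl_sumr|exact: univ].
have nLXL : ~ same_set L (sum_set X L).
  case: vX => _ [x [Xx x0]] _ sm; apply: x0; apply: indep; first exact: XW.
  by apply/sm; apply: incl_suml.
apply: (key _ _ Hinv Hiff _ _ _ vL vXL vW (incl_sumr _ _ sX) nLXL).
apply: NNPP => nl.
have vLW : lsg_vertex (sum_set L W).
  split; [exact: sum_sub|exists w; split=> //; exact: incl_sumr|exact: nl].
have sm := maxW _ vLW (incl_sumr _ _ sL).
apply: l0; apply: indep => //; apply/sm; exact: incl_suml.
Qed.
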